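(* Let $n\le s$ be positive integers and let $\mathbb{F}$ be a field with $|\mathbb{F}|\ge s'$, where $s'$ is the number of edges of the graph $G$ described in the context. Then the polynomial map $U(\mathbf{x},\mathbf{y}) : \mathbb{F}^{2s}\to\mathbb{F}^{n\times n}$ described in the context contains in its image every matrix $A\in\mathbb{F}^{n\times n}$ which is computed by a linear circuit of size at most $s$, and every coordinate of $U$ is a polynomial of degree at most $s'(s+1)$.
   Context: Linear circuits: a directed acyclic graph with $n$ input nodes labeled $X_1,\dots,X_n$ and $n$ output nodes, edges labeled by scalars of $\mathbb{F}$; each node computes the linear combination, with the edge labels as coefficients, of the linear forms computed by its children; size = number of edges; the circuit computes the matrix $A$ whose $(i,j)$ entry is the coefficient of $X_i$ in the form at the $j$-th output. The graph $G$: vertex set is a disjoint union $V_0\cup V_1\cup\dots\cup V_s\cup V_{s+1}$, where $V_0$ consists of $n$ input nodes labeled $X_1,\dots,X_n$, $V_{s+1}$ consists of $n$ output nodes, and each of $V_1,\dots,V_s$ has $s$ vertices; every vertex in $V_i$ has as children all vertices in $V_j$ for all $0\le j<i$ (for $0\le i\le s+1$). Let $s'$ be the number of edges of $G$ and enumerate them $e_1,\dots,e_{s'}$. The map $\mathrm{SV}_{s',s}(\mathbf{x},\mathbf{y}):\mathbb{F}^{2s}\to\mathbb{F}^{s'}$, with $\mathbf{x}=(x_1,\dots,x_s)$, $\mathbf{y}=(y_1,\dots,y_s)$: fix distinct $\alpha_1,\dots,\alpha_{s'}\in\mathbb{F}$, let $u_i(z)=\prod_{j\ne i}(z-\alpha_j)/\prod_{j\neq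 i}(\alpha_i-\alpha_j)$ be the Lagrange interpolation polynomials, and let the $i$-th coordinate be $P_i(\mathbf{x},\mathbf{y})=\sum_{j=1}^s u_i(y_j)x_j$. Label edge $e_i$ by $P_i(\mathbf{x},\mathbf{y})$. Then $U(\mathbf{x},\mathbf{y})$ is the $n\times n$ matrix whose $(i,j)$ entry is the sum, over all directed paths in $G$ from input $X_i$ to the $j$-th output node, of the product of the edge labels along the path. *)

(* Defs.v *)
From HB Require Import structures.
From mathcomp Require Import all_boot all_order all_algebra.
From mathcomp Require Import mpoly.
Set Implicit Arguments. Unset Strict Implicit. Unset Printing Implicit Defensive.
Import Order.TTheory GRing.Theory Num.Theory.
Local Open Scope ring_scope.

(* A circuit has nodes 'I_N.  An edge (u, v) \in E means that u is a    *)
(* child of v (the edge is directed from u to v) and carries the label  *)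
(* lab u v.  Acyclicity is encoded by a topological numbering: every    *)
(* edge (u, v) satisfies u < v (every finite DAG admits one).           *)
Record lcircuit (F : Type) (n : nat) := LCircuit {
  cN : nat;
  cE : {set 'I_cN * 'I_cN};
  clab : 'I_cN -> 'I_cN -> F;
  cin : 'I_n -> 'I_cN;
  cout : 'I_n -> 'I_cN
}.

Definition lcircuit_wf (F : Type) (n : nat) (C : lcircuit F n) : Prop :=
  (forall e, e \in cE C -> (e.1 < e.2)%N) /\
  [/\ injective (cin C), injective (cout C),
      (forall i j, cin C i != cout C j),
      (forall u i, (u, cin C i) \notin cE C) &
      (forall j v, (cout C j, v) \notin cE C)].

Definition lcircuit_size (F : Type) (n : nat) (C : lcircuit F n) : nat :=
  #|cE C|.

(* C computes A: the linear forms (coefficient row vectors) computed at *)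
(* the nodes satisfy the defining equations (they are uniquely          *)
(* determined, by acyclicity), and A i j is the coefficient of X_i in   *)
(* the form computed at the j-th output.                                *)
Definition lcircuit_computes (F : fieldType) (n : nat) (C : lcircuit F n)
    (A : 'M[F]_n) : Prop :=
  exists f : 'I_(cN C) -> 'rV[F]_n,
    [/\ forall i, f (cin C i) = delta_mx 0 i,
        forall v, (forall i, v != cin C i) ->
          f v = \sum_(u | (u, v) \in cE C) @clab F n C u v *: f u &
        forall i j, A i j = f (cout C j) 0 i].

(* The graph G: layers V_0 (n inputs), V_1..V_s (s vertices each),      *)
(* V_{s+1} (n outputs).                                                  *)
Definition layer_size (n s : nat) (l : 'I_s.+2) : nat :=
  if (val l == 0%N) || (val l == s.+1) then n else s.
Arguments layer_size : clear implicits.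

Definition Gvert (n s : nat) := {l : 'I_s.+2 & 'I_(layer_size n s l)}.

Definition Glayer (n s : nat) (v : Gvert n s) : nat := val (tag v).

Definition Gedge_rel (n s : nat) : rel (Gvert n s) :=
  fun u v => (Glayer u < Glayer v)%N.

(* edges of G (as pairs (child, parent)) *)
Definition Gedge (n s : nat) := {e : Gvert n s * Gvert n s | Gedge_rel e.1 e.2}.

Definition sprime (n s : nat) : nat := #|{: Gedge n s}|.

Lemma lt0_s2 (s : nat) : (0 < s.+2)%N. Proof. by []. Qed.
Lemma ltSs_s2 (s : nat) : (s.+1 < s.+2)%N. Proof. by []. Qed.

Definition layer0 (s : nat) : 'I_s.+2 := Ordinal (lt0_s2 s).
Definition layerlast (s : nat) : 'I_s.+2 := Ordinal (ltSs_s2 s).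

Lemma layer_size0 (n s : nat) : layer_size n s (layer0 s) = n.
Proof. by []. Qed.
Lemma layer_sizelast (n s : nat) : layer_size n s (layerlast s) = n.
Proof. by rewrite /layer_size /= eqxx. Qed.

Definition Ginput (n s : nat) (i : 'I_n) : Gvert n s :=
  Tagged (fun l => 'I_(layer_size n s l)) (cast_ord (esym (layer_size0 n s)) i).
Definition Goutput (n s : nat) (j : 'I_n) : Gvert n s :=
  Tagged (fun l => 'I_(layer_size n s l)) (cast_ord (esym (layer_sizelast n s)) j).

Definition xvar (F : fieldType) (s : nat) (j : 'I_s) : {mpoly F[s + s]} :=
  'X_(lshift s j).
Definition yvar (F : fieldType) (s : nat) (j : 'I_s) : {mpoly F[s + s]} :=
  'X_(rshift s j).

Definition lagrange_at (F : fieldType) (E : finType) (alpha : E -> F) (e : E)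
    (k : nat) (z : {mpoly F[k]}) : {mpoly F[k]} :=
  \prod_(e' | e' != e) ((z - (alpha e')%:MP) * ((alpha e - alpha e')^-1)%:MP).

Definition SVcoord (F : fieldType) (n s : nat) (alpha : Gedge n s -> F)
    (e : Gedge n s) : {mpoly F[s + s]} :=
  \sum_(j < s) lagrange_at alpha e (yvar F j) * xvar F j.

Definition Glabel (F : fieldType) (n s : nat) (alpha : Gedge n s -> F)
    (u v : Gvert n s) : {mpoly F[s + s]} :=
  match insub (u, v) with
  | Some e => SVcoord alpha e
  | None => 0
  end.

Fixpoint path_weight (V : Type) (R : pzRingType) (lbl : V -> V -> R)
    (x : V) (p : seq V) : R :=
  if p is y :: p' then lbl x y * path_weight lbl y p' else 1.

Definition is_Gpath (n s : nat) (i j : 'I_n) (p : seq (Gvert n s)) : bool :=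
  if p is x :: p' then
    [&& x == Ginput s i, last x p' == Goutput s j & path (@Gedge_rel n s) x p']
  else false.

(* U(x, y)_(i,j): sum over all directed paths from X_i to output j of the *)
(* product of edge labels.  Every path of G has at most s + 2 vertices     *)
(* (layers strictly increase), so paths are enumerated as k-tuples,        *)
(* k < s + 3; each path is counted exactly once.                           *)
Definition Umat (F : fieldType) (n s : nat) (alpha : Gedge n s -> F)
    : 'M[{mpoly F[s + s]}]_n :=
  \matrix_(i < n, j < n)
    \sum_(k < s.+3) \sum_(p : k.-tuple (Gvert n s) | is_Gpath i j p)
       path_weight (Glabel alpha) (head (Ginput s i) p) (behead p).

(* Main.v *)
Require Import Defs.
From HB Require Import structures.
From mathcomp Require Import all_boot all_order all_algebra.
From mathcomp Require Import mpoly.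
From mathcomp Require Import zify.
Import GRing.Theory.
Local Open Scope ring_scope.
Set Implicit Arguments. Unset Strict Implicit. Unset Printing Implicit Defensive.

Lemma msize_sum_le (F : fieldType) (k : nat) (I : Type) (r : seq I) (P : pred I)
   (G : I -> {mpoly F[k]}) m :
  (forall i, P i -> (msize (G i) <= m)%N) -> (msize (\sum_(i <- r | P i) G i) <= m)%N.
Proof.
move=> h; elim/big_ind: _ => //; first by rewrite msize0.
by move=> x y hx hy; apply: leq_trans (msizeD_le _ _) _; rewrite geq_max hx hy.
Qed.

Lemma msizeM_deg (F : fieldType) (k : nat) (p q : {mpoly F[k]}) a b :
  (msize p <= a.+1)%N -> (msize q <= b.+1)%N -> (msize (p * q) <= (a + b).+1)%N.
Proof.
have [->|p0] := eqVneq p 0; first by rewrite mul0r msize0.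
have [->|q0] := eqVneq q 0; first by rewrite mulr0 msize0.
rewrite msizeM // => hp hq.
have := leq_add hp hq; rewrite addSn addnS /=.
case: (msize p) (msize q) => [|x] [|y] //=; rewrite ?addn0 ?addnS //; lia.
Qed.

Lemma msize_prod_card (F : fieldType) (k : nat) (I : finType) (P : pred I)
   (G : I -> {mpoly F[k]}) :
  (forall i, (msize (G i) <= 2)%N) -> (msize (\prod_(i | P i) G i) <= #|P|.+1)%N.
Proof.
move=> h; rewrite -sum1_card.
elim/big_rec2: _ => [|i y1 y2 _ hy]; first by rewrite msize1.
by rewrite add1n; apply: (msizeM_deg (a := 1%N)) => //; apply: h.
Qed.

Lemma msize_Xi (F : fieldType) (k : nat) (i : 'I_k) : msize ('X_i : {mpoly F[k]}) = 2%N.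
Proof. by rewrite msizeX mdeg1. Qed.

Lemma msize_lagrange_gen (F : fieldType) (k : nat) (E : finType) (alpha : E -> F) e
   (z : {mpoly F[k]}) :
  (msize z <= 2)%N -> (msize (lagrange_at alpha e z) <= #|E|.-1.+1)%N.
Proof.
move=> hz; rewrite /lagrange_at.
apply: leq_trans (msize_prod_card _ _) _.
  move=> e'; apply: (msizeM_deg (a := 1%N) (b := 0%N)).
    apply: leq_trans (msizeD_le _ _) _; rewrite msizeN msizeC geq_max hz.
    by case: (_ != 0).
  by rewrite msizeC; case: (_ != 0).
rewrite ltnS -(cardC1 e).
by apply: eq_leq; apply: eq_card => x; rewrite !inE.
Qed.

Lemma msize_lagrange (F : fieldType) (n s : nat) (alpha : Gedge n s -> F) e (j : 'I_s) :
  (msize (lagrange_at alpha e (yvar F j)) <= (sprime n s).-1.+1)%N.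
Proof. by apply: msize_lagrange_gen; rewrite /yvar msize_Xi. Qed.

Lemma sprime_gt0 (F : fieldType) (n s : nat) (alpha : Gedge n s -> F) (e : Gedge n s) :
  (0 < sprime n s)%N.
Proof. by rewrite /sprime (cardD1 e) inE. Qed.

Lemma msize_SV (F : fieldType) (n s : nat) (alpha : Gedge n s -> F) e :
  (msize (SVcoord alpha e) <= (sprime n s).+1)%N.
Proof.
apply: msize_sum_le => j _.
have := msizeM_deg (msize_lagrange alpha e j) (_ : msize (xvar F j) <= 1.+1)%N.
rewrite addn1 prednK; last exact: sprime_gt0 alpha e.
by apply; rewrite /xvar msize_Xi.
Qed.

Lemma msize_Glabel (F : fieldType) (n s : nat) (alpha : Gedge n s -> F) u v :
  (msize (Glabel alpha u v) <= (sprime n s).+1)%N.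
Proof.
rewrite /Glabel; case: insubP => [e _ _|_]; first exact: msize_SV.
by rewrite msize0.
Qed.

Lemma msize_weight (F : fieldType) (k : nat) (V : Type) (lbl : V -> V -> {mpoly F[k]}) m x t :
  (forall u v, msize (lbl u v) <= m.+1)%N ->
  (msize (path_weight lbl x t) <= (size t * m).+1)%N.
Proof.
move=> h; elim: t x => [|y t IH] x /=; first by rewrite msize1.
by rewrite mulSn; apply: msizeM_deg.
Qed.

Lemma msize_Umat (F : fieldType) (n s : nat) (alpha : Gedge n s -> F) i j :
  (msize (Umat alpha i j) <= (sprime n s * s.+1).+1)%N.
Proof.
rewrite mxE; apply: msize_sum_le => k _; apply: msize_sum_le => p _.
apply: leq_trans (msize_weight _ _ (msize_Glabel alpha)) _.
rewrite ltnS mulnC leq_mul2l size_behead size_tuple; apply/orP; right.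
by have := ltn_ord k; rewrite ltnS; lia.
Qed.

Definition Wk (V : finType) (R : comPzRingType) (lbl : V -> V -> R) (k : nat) (a b : V) : R :=
  \sum_(t : k.-tuple V) (last a t == b)%:R * path_weight lbl a t.

Lemma Wk0 (V : finType) (R : comPzRingType) (lbl : V -> V -> R) a b :
  Wk lbl 0 a b = (a == b)%:R.
Proof.
rewrite /Wk (big_pred1 [tuple]) /= ?mulr1 // => t; apply/esym/eqP; exact: tuple0.
Qed.

Lemma sum_tupleS (V : finType) (R : comPzRingType) k (G : k.+1.-tuple V -> R) :
  \sum_(t : k.+1.-tuple V) G t = \sum_(x : V) \sum_(t : k.-tuple V) G [tuple of x :: t].
Proof.
rewrite pair_bigA /=.
rewrite (reindex (fun p : V * k.-tuple V => [tuple of p.1 :: p.2])) //=.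
exists (fun t : k.+1.-tuple V => (thead t, [tuple of behead t])).
  by case=> x t _ /=; rewrite theadE; congr pair; apply: val_inj.
by move=> t _; rewrite /= -tuple_eta.
Qed.

Lemma WkS (V : finType) (R : comPzRingType) (lbl : V -> V -> R) k a b :
  Wk lbl k.+1 a b = \sum_y lbl a y * Wk lbl k y b.
Proof.
rewrite /Wk sum_tupleS; apply: eq_bigr => y _.
rewrite mulr_sumr; apply: eq_bigr => t _ /=.
by rewrite mulrCA.
Qed.

Lemma WkSr (V : finType) (R : comPzRingType) (lbl : V -> V -> R) k a b :
  Wk lbl k.+1 a b = \sum_y Wk lbl k a y * lbl y b.
Proof.
elim: k a b => [|k IH] a b.
  rewrite WkS (bigD1 b) //= [RHS](bigD1 a) //= !Wk0 !eqxx mulr1 mul1r.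
  rewrite [X in _ + X = _]big1 => [|y yn]; last by rewrite Wk0 (negPf yn) mulr0.
  rewrite [X in _ = _ + X]big1 => [|y yn]; last by rewrite Wk0 eq_sym (negPf yn) mul0r.
  by rewrite !addr0.
rewrite WkS.
under eq_bigr do rewrite IH mulr_sumr.
rewrite exchange_big /=; apply: eq_bigr => z _.
by rewrite WkS mulr_suml; apply: eq_bigr => y _; rewrite mulrA.
Qed.

Lemma Wk_rmorph (V : finType) (R S : comPzRingType) (f : {rmorphism R -> S}) (lbl : V -> V -> R) k a b :
  f (Wk lbl k a b) = Wk (fun x y => f (lbl x y)) k a b.
Proof.
elim: k a b => [|k IH] a b; first by rewrite !Wk0 rmorph_nat.
rewrite !WkS rmorph_sum; apply: eq_bigr => y _; by rewrite rmorphM IH.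
Qed.

Lemma weight_nonpath (V : Type) (R : pzRingType) (lbl : V -> V -> R) (r : rel V) :
  (forall x y, ~~ r x y -> lbl x y = 0) ->
  forall x t, ~~ path r x t -> path_weight lbl x t = 0.
Proof.
move=> h x t; elim: t x => [|y t IH] x //=.
by rewrite negb_and => /orP [/h ->|/IH ->]; rewrite ?mul0r ?mulr0.
Qed.

Lemma Glabel_nonedge (F : fieldType) (n s : nat) (alpha : Gedge n s -> F) u v :
  ~~ Gedge_rel u v -> Glabel alpha u v = 0.
Proof. by move=> h; rewrite /Glabel insubF //; apply/negbTE. Qed.

Lemma Umat_W (F : fieldType) (n s : nat) (alpha : Gedge n s -> F) i j :
  Umat alpha i j = \sum_(k < s.+2) Wk (Glabel alpha) k (Ginput s i) (Goutput s j).
Proof.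
rewrite mxE big_ord_recl big_pred0 ?add0r; last by move=> p; rewrite (tuple0 p).
apply: eq_bigr => k _.
rewrite big_mkcond /=.
rewrite sum_tupleS (bigD1 (Ginput s i)) //= [X in _ + X]big1 ?addr0; last first.
  by move=> x /negPf xn; apply: big1 => t _ /=; rewrite xn.
rewrite /Wk; apply: eq_bigr => t _ /=; rewrite eqxx /=.
case: (last _ _ == _); rewrite /= ?mul0r ?mul1r //.
case hp: (path _ _ _) => //.
rewrite (weight_nonpath (r := @Gedge_rel n s)) ?hp //.
exact: Glabel_nonedge.
Qed.

Lemma Wk_layer (V : finType) (R : comPzRingType) (M : V -> V -> R) (L : V -> nat) :
  (forall y b, M y b != 0 -> (L y < L b)%N) ->
  forall k a b, Wk M k a b != 0 -> (L a + k <= L b)%N.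
Proof.
move=> hM; elim=> [|k IH] a b.
  rewrite Wk0 addn0; have [->|ne] := eqVneq a b => //.
  by rewrite eqxx.
rewrite WkS => hne; apply/negPn/negP => hlt; move/eqP: hne; apply.
apply: big1 => y _.
have [->|h1] := eqVneq (M a y) 0; first by rewrite mul0r.
have [->|h2] := eqVneq (Wk M k y b) 0; first by rewrite mulr0.
have := hM _ _ h1; have := IH _ _ h2; move: hlt; lia.
Qed.

Lemma T_rec (V : finType) (R : comPzRingType) (M : V -> V -> R) (L : V -> nat) (s : nat) :
  (forall y b, M y b != 0 -> (L y < L b)%N) -> (forall y, (L y <= s.+1)%N) ->
  forall a b, \sum_(k < s.+2) Wk M k a b =
     (a == b)%:R + \sum_y (\sum_(k < s.+2) Wk M k a y) * M y b.
Proof.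
move=> hM hL a b.
rewrite big_ord_recl Wk0; congr (_ + _).
under eq_bigr do rewrite WkSr.
rewrite exchange_big /=; apply: eq_bigr => y _.
rewrite [in RHS]big_ord_recr /= mulrDl mulr_suml.
have -> : Wk M s.+1 a y * M y b = 0.
  have [->|h1] := eqVneq (Wk M s.+1 a y) 0; first by rewrite mul0r.
  have [->|h2] := eqVneq (M y b) 0; first by rewrite mulr0.
  have := Wk_layer hM h1; have := hM _ _ h2; have := hL b; lia.
by rewrite addr0.
Qed.

Definition Tsum (V : finType) (R : comPzRingType) (M : V -> V -> R) (s : nat) (a b : V) : R :=
  \sum_(k < s.+2) Wk M k a b.

Definition isin (n N : nat) (cin : 'I_n -> 'I_N) (u : 'I_N) := [exists i, cin i == u].
Definition Sset (n N : nat) (E : {set 'I_N * 'I_N}) (cin : 'I_n -> 'I_N) : {set 'I_N} :=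
  [set u | ~~ isin cin u & [exists w, (u, w) \in E]].
Definition rk (N : nat) (S : {set 'I_N}) (u : 'I_N) : nat := #|[set w in S | (w < u)%N]|.

Lemma layer_size_gt0 n s l : (0 < n)%N -> (0 < s)%N -> (0 < layer_size n s l)%N.
Proof. by move=> hn hs; rewrite /layer_size; case: ifP. Qed.

Definition phi (n s N : nat) (hn : (0 < n)%N) (hs : (0 < s)%N) (cin cout : 'I_n -> 'I_N)
  (S : {set 'I_N}) (u : 'I_N) : Gvert n s :=
  if [pick i | cin i == u] is Some i then Ginput s i
  else if [pick j | cout j == u] is Some j then Goutput s j
  else Tagged (fun l => 'I_(layer_size n s l))
         (Ordinal (@layer_size_gt0 n s (inord (rk S u).+1) hn hs)).

Definition Gidx (n s : nat) (v : Gvert n s) : nat := val (tagged v).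

Lemma Gidx_in n s i : Gidx (Ginput s i : Gvert n s) = i. Proof. by []. Qed.
Lemma Gidx_out n s i : Gidx (Goutput s i : Gvert n s) = i. Proof. by []. Qed.
Lemma Glayer_in n s i : Glayer (Ginput s i : Gvert n s) = 0%N. Proof. by []. Qed.
Lemma Glayer_out n s i : Glayer (Goutput s i : Gvert n s) = s.+1. Proof. by []. Qed.
Lemma Glayer_le n s (y : Gvert n s) : (Glayer y <= s.+1)%N.
Proof. by rewrite /Glayer -ltnS; apply: ltn_ord. Qed.

Lemma Ginput_eq n s (i i' : 'I_n) : (Ginput s i == Ginput s i' :> Gvert n s) = (i == i').
Proof.
apply/eqP/eqP => [h|->] //; apply: val_inj.
by have := congr1 (@Gidx n s) h; rewrite !Gidx_in.
Qed.

Lemma rk_lt_card N (S : {set 'I_N}) u : u \in S -> (rk S u < #|S|)%N.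
Proof.
move=> uS; apply: proper_card; apply/properP; split.
  by apply/subsetP => w; rewrite inE => /andP [].
by exists u => //; rewrite inE ltnn andbF.
Qed.

Lemma rk_mono N (S : {set 'I_N}) (u w : 'I_N) : u \in S -> (u < w)%N -> (rk S u < rk S w)%N.
Proof.
move=> uS uw; apply: proper_card; apply/properP; split.
  apply/subsetP => x; rewrite !inE => /andP [-> xu] /=; exact: ltn_trans uw.
by exists u; rewrite !inE ?uS ?uw // ltnn andbF.
Qed.

Lemma card_le_inj (T U : finType) (g : T -> U) (A : {set T}) (X : {set U}) :
  injective g -> (forall x, x \in A -> g x \in X) -> (#|A| <= #|X|)%N.
Proof.
move=> ginj h; rewrite -(card_imset A ginj); apply: subset_leq_card.
by apply/subsetP => y /imsetP [x xA ->]; apply: h.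
Qed.

Lemma sum_pair_snd (I : finType) (R : nmodType) (E : {set I * I}) u (G : I -> I -> R) :
  \sum_(e | (e \in E) && (e.2 == u)) G e.1 e.2 = \sum_(w | (w, u) \in E) G w u.
Proof.
rewrite (reindex_onto (fun w => (w, u)) fst) /=.
  by apply: eq_bigl => w /=; rewrite !eqxx !andbT.
by case=> a b /andP [_ /eqP /= ->].
Qed.

Lemma phi_in n s N hn hs (cin cout : 'I_n -> 'I_N) S i :
  injective cin -> @phi n s N hn hs cin cout S (cin i) = Ginput s i.
Proof.
move=> cinj; rewrite /phi; case: pickP => [i' /eqP /cinj -> //|/(_ i)].
by rewrite eqxx.
Qed.

Lemma phi_out n s N hn hs (cin cout : 'I_n -> 'I_N) S j :
  injective cout -> (forall i j, cin i != cout j) ->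
  @phi n s N hn hs cin cout S (cout j) = Goutput s j.
Proof.
move=> coinj cio; rewrite /phi; case: pickP => [i' /eqP h|_].
  by have := cio i' j; rewrite h eqxx.
case: pickP => [j' /eqP /coinj -> //|/(_ j)].
by rewrite eqxx.
Qed.

Lemma phi_S n s N hn hs (cin cout : 'I_n -> 'I_N) (E : {set 'I_N * 'I_N}) u :
  (forall j v, (cout j, v) \notin E) ->
  u \in Sset E cin -> (rk (Sset E cin) u < s)%N ->
  Glayer (@phi n s N hn hs cin cout (Sset E cin) u) = (rk (Sset E cin) u).+1.
Proof.
move=> nout; rewrite inE => /andP [nin /existsP [w uw]] hrk.
rewrite /phi; case: pickP => [i' /eqP h|_].
  by move: nin; rewrite /isin; case/existsP; exists i'; rewrite h.
case: pickP => [j' /eqP h|_].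
  by move: uw; rewrite -h (negPf (nout _ _)).
by rewrite /Glayer /= inordK // ltnS; apply: leq_trans hrk _.
Qed.

Lemma lag_eval (F : fieldType) (E : finType) (alpha : E -> F) (e e2 : E) :
  injective alpha ->
  \prod_(e' | e' != e) ((alpha e2 - alpha e') * (alpha e - alpha e')^-1) = (e2 == e)%:R.
Proof.
move=> ainj; have [->|ne] := eqVneq e2 e.
  rewrite big1 // => e' ne'; rewrite divff // subr_eq0.
  by apply/eqP => /ainj /eqP; rewrite eq_sym (negPf ne').
by rewrite (bigD1 e2) //= subrr !mul0r.
Qed.

Lemma SV_surj (F : fieldType) (s : nat) (E : finType) (alpha : E -> F) (h : E -> F) :
  let D := [set e | h e != 0%R] in
  injective alpha -> (#|D| <= s)%N ->
  exists v : 'I_(s + s) -> F, forall e,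
    (\sum_(j < s) lagrange_at alpha e (yvar F j) * xvar F j).@[v] = h e.
Proof.
move=> D ainj hcard.
pose ed := enum D.
pose oe (j : 'I_s) := [pick e in D | index e ed == val j].
pose xv j := if oe j is Some e then h e else 0.
pose yv j := if oe j is Some e then alpha e else 0.
pose v (k : 'I_(s + s)) := match split k with inl j => xv j | inr j => yv j end.
exists v => e.
have vl j : v (lshift s j) = xv j.
  by rewrite /v (unsplitK (inl _ j : 'I_s + 'I_s)).
have vr j : v (rshift s j) = yv j.
  by rewrite /v (unsplitK (inr _ j : 'I_s + 'I_s)).
rewrite rmorph_sum /=.
have term j : (lagrange_at alpha e (yvar F j) * xvar F j).@[v] = (oe j == Some e)%:R * h e.
  rewrite mevalM /xvar mevalXU vl /lagrange_at rmorph_prod /=.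
  under eq_bigr do rewrite mevalM mevalB !mevalC /yvar mevalXU vr.
  rewrite /xv /yv; case: (oe j) => [e2|]; last by rewrite mulr0 mul0r.
  rewrite lag_eval //.
  have [->|ne] := eqVneq e2 e; first by rewrite !eqxx mul1r.
  have -> : (Some e2 == Some e) = false by apply/eqP => -[] /eqP; rewrite (negPf ne).
  by rewrite !mul0r.
under eq_bigr do rewrite term.
have [h0|hn0] := eqVneq (h e) 0.
  by rewrite h0; apply: big1 => j _; rewrite mulr0.
have eD : e \in D by rewrite inE.
have eed : e \in ed by rewrite mem_enum.
have lt : (index e ed < s)%N.
  by apply: leq_trans hcard; rewrite cardE index_mem.
have oe0 : oe (Ordinal lt) = Some e.
  rewrite /oe; case: pickP => [e2 /andP [e2D /eqP ie]|/(_ e)]; last by rewrite eD eqxx.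
  have e2d : e2 \in ed by rewrite mem_enum.
  by congr Some; rewrite -(nth_index e e2d) ie /= nth_index.
rewrite (bigD1 (Ordinal lt)) //= oe0 eqxx mul1r big1 ?addr0 // => j jn.
case oj : (oe j) => [e2|]; last by rewrite mul0r.
have [e2e|] := eqVneq e2 e; last by move=> ne; rewrite (_ : (Some e2 == Some e) = false) ?mul0r //; apply/eqP => -[] /eqP; rewrite (negPf ne).
move: oj; rewrite /oe; case: pickP => [e3 /andP [_ /eqP ie] [] e3e2|]; last by [].
exfalso; move/eqP: jn; apply; apply: val_inj => /=.
by rewrite -ie e3e2 e2e.
Qed.

Lemma T_rec' (n s : nat) (R : comPzRingType) (M : Gvert n s -> Gvert n s -> R) :
  (forall y b, M y b != 0 -> (Glayer y < Glayer b)%N) ->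
  forall a b, Tsum M s a b = (a == b)%:R + \sum_y Tsum M s a y * M y b.
Proof. by move=> hM a b; apply: T_rec hM (@Glayer_le n s) a b. Qed.

Lemma embed (F : fieldType) (n s : nat) (alpha : Gedge n s -> F) :
  (0 < n)%N -> (n <= s)%N -> injective alpha ->
  forall (A : 'M[F]_n) (C : lcircuit F n),
      lcircuit_wf C -> (lcircuit_size C <= s)%N -> lcircuit_computes C A ->
      exists v : 'I_(s + s) -> F, forall i j, (Umat alpha i j).@[v] = A i j.
Proof.
move=> hn hns ainj A [N E lab cin cout] [ord_e [cin_inj cout_inj cinout no_in no_out]].
rewrite /lcircuit_size /= => hsz [f [/= f_in f_rec hA]].
have hs : (0 < s)%N by apply: leq_trans hns.
pose S := Sset E cin.
pose ph := @phi n s N hn hs cin cout S.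
pose isout u := [exists j, cout j == u].
pose good u := (u \in S) || isout u.
have cardS : (#|S| <= s)%N.
  apply: leq_trans hsz; apply: leq_trans (leq_imset_card (fun e : 'I_N * 'I_N => e.1) E).
  apply: subset_leq_card; apply/subsetP => u; rewrite inE => /andP [_ /existsP [w uw]].
  by apply/imsetP; exists (u, w).
have rks u : u \in S -> (rk S u < s)%N.
  by move=> uS; apply: leq_trans (rk_lt_card uS) cardS.
have Lin i : Glayer (ph (cin i)) = 0%N by rewrite /ph phi_in.
have Lout j : Glayer (ph (cout j)) = s.+1 by rewrite /ph phi_out.
have LS u : u \in S -> Glayer (ph u) = (rk S u).+1.
  by move=> uS; rewrite /ph phi_S // rks.
have goodL u : good u -> (0 < Glayer (ph u))%N.
  case/orP => [/LS -> //| /existsP [j /eqP <-]]. by move: (Lout j) => ->.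
have src e : e \in E -> isin cin e.1 || (e.1 \in S).
  case: e => a b eE /=; case: (boolP (isin cin a)) => //= na.
  by rewrite inE na /=; apply/existsP; exists b.
have erel e : e \in E -> good e.2 -> Gedge_rel (ph e.1) (ph e.2).
  move=> eE ge; rewrite /Gedge_rel.
  case/orP: (src e eE) => [/existsP [i /eqP <-]|e1S]; first by rewrite Lin goodL.
  rewrite LS //; case/orP: ge => [e2S|/existsP [j /eqP <-]].
    by rewrite LS // ltnS; apply: rk_mono => //; apply: ord_e.
  by rewrite Lout ltnS rks.
have good_inj u w : good u -> good w -> ph u = ph w -> u = w.
  move=> gu gw e.
  have hL := congr1 (@Glayer n s) e.
  case/orP: gu => [uS|/existsP [j /eqP uj]]; case/orP: gw => [wS|/existsP [j' /eqP wj]].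
  - move: hL; rewrite !LS // => -[] hr.
    case: (ltngtP u w) => [uw|wu|/val_inj //].
      by have := rk_mono uS uw; rewrite hr ltnn.
    by have := rk_mono wS wu; rewrite hr ltnn.
  - by move: hL; rewrite LS // -wj Lout => -[] hr; have := rks _ uS; rewrite hr ltnn.
  - by move: hL; rewrite (LS _ wS) -uj Lout => -[] hr; have := rks _ wS; rewrite hr ltnn.
  - move: e; rewrite -uj -wj /ph !phi_out // => e.
    have := congr1 (@Gidx n s) e; rewrite !Gidx_out => h.
    by congr cout; apply: val_inj.
pose h' (y b : Gvert n s) := \sum_(e | (e \in E) && good e.2)
   (ph e.1 == y)%:R * (ph e.2 == b)%:R * lab e.1 e.2.
pose hG (e : Gedge n s) := h' (val e).1 (val e).2.
have hsupp : (#|[set e | hG e != 0%R]| <= s)%N.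
  pose X := [set (ph e.1, ph e.2) | e in E].
  apply: leq_trans hsz; apply: leq_trans (leq_imset_card _ E).
  apply: (card_le_inj (g := val)); first exact: val_inj.
  move=> e; rewrite inE; apply: contraR => nX.
  apply/eqP; apply: big1 => e' /andP [e'E _].
  case: eqP => [h1|]; last by rewrite mul0r mul0r.
  case: eqP => [h2|]; last by rewrite mulr0 mul0r.
  exfalso; move/negP: nX; apply.
  have -> : val e = (ph e'.1, ph e'.2) by rewrite h1 h2; case: (val e).
  by rewrite /X; apply: (imset_f (fun e0 : 'I_N * 'I_N => (ph e0.1, ph e0.2)) e'E).
have [v hv] := SV_surj ainj hsupp.
exists v => i j.
pose M (y b : Gvert n s) := (Glabel alpha y b).@[v].
have hM y b : M y b = h' y b.
  rewrite /M /Glabel; case: insubP => [e he ev|hne].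
    by rewrite /SVcoord hv /hG ev.
  rewrite meval0; apply/esym/big1 => e /andP [eE ge].
  case: eqP => [h1|]; last by rewrite mul0r mul0r.
  case: eqP => [h2|]; last by rewrite mulr0 mul0r.
  by move: hne; rewrite /= -h1 -h2 erel.
have hML y b : M y b != 0 -> (Glayer y < Glayer b)%N.
  apply: contraR => hn'; apply/eqP.
  by rewrite /M Glabel_nonedge ?meval0.
have UT : (Umat alpha i j).@[v] = Tsum M s (Ginput s i) (Goutput s j).
  rewrite Umat_W rmorph_sum; apply: eq_bigr => k _.
  exact: (Wk_rmorph (meval v)).
have Phin i' : ph (cin i') = Ginput s i' by rewrite /ph phi_in.
have Phout j' : ph (cout j') = Goutput s j' by rewrite /ph phi_out.
have key u : isin cin u || good u -> Tsum M s (Ginput s i) (ph u) = f u 0 i.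
  have [k] := ubnP (val u); elim: k u => // k IH u /= ltuk hu.
  rewrite T_rec' //.
  case: (boolP (isin cin u)) => [/existsP [i' /eqP <-]|nin].
    rewrite Phin big1 ?addr0 => [|y _]; last first.
      rewrite hM /h' big1 ?mulr0 // => e /andP [eE ge].
      have -> : (ph e.2 == Ginput s i') = false.
        by apply/negbTE; apply/eqP => h; have := goodL _ ge; rewrite h Glayer_in.
      by rewrite mulr0 mul0r.
    by rewrite f_in mxE Ginput_eq eqxx.
  rewrite (negPf nin) /= in hu.
  have -> : (Ginput s i == ph u) = false.
    by apply/negbTE; apply/eqP => h; have := goodL _ hu; rewrite -h Glayer_in.
  rewrite add0r f_rec; last first.
    by move=> i'; apply: contra nin => /eqP ->; apply/existsP; exists i'.
  rewrite summxE.
  under eq_bigr do rewrite hM.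
  have step1 : \sum_y Tsum M s (Ginput s i) y * h' y (ph u) =
      \sum_(e | (e \in E) && good e.2)
         (ph e.2 == ph u)%:R * lab e.1 e.2 * Tsum M s (Ginput s i) (ph e.1).
    rewrite /h'; under eq_bigr do rewrite mulr_sumr.
    rewrite exchange_big /=; apply: eq_bigr => e _.
    rewrite (bigD1 (ph e.1)) //= big1 ?addr0 => [|y yn].
      by rewrite eqxx mul1r mulrC.
    by rewrite eq_sym (negPf yn) !mul0r mulr0.
  rewrite step1.
  have step2 : \sum_(e | (e \in E) && good e.2)
         (ph e.2 == ph u)%:R * lab e.1 e.2 * Tsum M s (Ginput s i) (ph e.1) =
      \sum_(e | (e \in E) && (e.2 == u)) lab e.1 e.2 * Tsum M s (Ginput s i) (ph e.1).
    rewrite big_mkcond [RHS]big_mkcond; apply: eq_bigr => e _.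
    case: (e \in E) => //=; case ge: (good e.2) => /=.
      have -> : (ph e.2 == ph u) = (e.2 == u).
        by apply/eqP/eqP => [/good_inj|->] //; apply.
      by case: (e.2 == u); rewrite ?mul1r ?mul0r.
    have -> // : (e.2 == u) = false.
    by apply/negbTE; apply: contraFN ge => /eqP ->.
  rewrite step2 (sum_pair_snd E u (fun a b => lab a b * Tsum M s (Ginput s i) (ph a))).
  apply: eq_bigr => w wu; rewrite mxE IH //.
    by have := ord_e _ wu; move: ltuk => /=; lia.
  by have := src _ wu; rewrite /= /good; case/orP => ->; rewrite ?orbT.
rewrite hA UT -Phout key //.
by rewrite /good /isout; apply/orP; right; apply/orP; right; apply/existsP; exists j.
Qed.

Unset Implicit Arguments.
Set Strict Implicit.

Theorem lemma3p1 (F : fieldType) (n s : nat) (alpha : Gedge n s -> F) :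
  (0 < n)%N -> (n <= s)%N ->
  injective alpha ->
  (forall (A : 'M[F]_n) (C : lcircuit F n),
      lcircuit_wf C -> (lcircuit_size C <= s)%N -> lcircuit_computes C A ->
      exists v : 'I_(s + s) -> F, forall i j, (Umat alpha i j).@[v] = A i j)
  /\ (forall i j, (msize (Umat alpha i j) <= (sprime n s * s.+1).+1)%N).
Proof.
move=> hn hns ainj; split; first exact: embed.
exact: msize_Umat.
Qed.
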